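(* Let $R$ be a commutative ring containing a regular element $x$. Then $FP\text{-}\mathrm{id}_R(R)=FP\text{-}\mathrm{id}_{R\bowtie xR}(R\bowtie xR)$.
   Context: All rings are commutative with identity. $R\bowtie xR:=\{(r,r+xs)\mid r,s\in R\}$, a subring of $R\times R$ with componentwise operations. A regular element is a non-zerodivisor. For a module $M$ over a ring $A$, the $FP$-injective dimension $FP\text{-}\mathrm{id}_A(M)$ is the least integer $n\ge 0$ such that $\mathrm{Ext}^{n+1}_A(P,M)=0$ for every finitely presented $A$-module $P$ (or $\infty$ if none exists). *)

(* Defs.v *)
From HB Require Import structures.
From mathcomp Require Import all_boot all_order all_algebra.
From Stdlib Require Import ClassicalEpsilon.

Set Implicit Arguments.
Unset Strict Implicit.
Unset Printing Implicit Defensive.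

Import GRing.Theory.
Local Open Scope ring_scope.

Definition regular_elt (R : comPzRingType) (x : R) : Prop :=
  forall y : R, x * y = 0 -> y = 0.

Section Bowtie.
Variables (R : comPzRingType) (x : R).

Definition in_bowtie (p : R * R) : Prop := exists r s : R, p = (r, r + x * s).

Definition bowtie_pred : pred (R * R) :=
  fun p => if excluded_middle_informative (in_bowtie p) then true else false.

Lemma bowtie_predP p : reflect (in_bowtie p) (bowtie_pred p).
Proof.
rewrite /bowtie_pred; case: excluded_middle_informative => H.
  by constructor. by constructor.
Qed.

Lemma bowtie_subring_closed : subring_closed bowtie_pred.
Proof.
split.
- apply/bowtie_predP; exists 1, 0; by rewrite mulr0 addr0.
- move=> p q /bowtie_predP [r [s ->]] /bowtie_predP [r' [s' ->]].
  apply/bowtie_predP; exists (r - r'), (s - s').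
  rewrite mulrBr; congr (_, _) => /=.
  by rewrite opprD addrACA.
- move=> p q /bowtie_predP [r [s ->]] /bowtie_predP [r' [s' ->]].
  apply/bowtie_predP; exists (r * r'), (r * s' + s * r' + x * s * s').
  congr (_, _) => /=.
  rewrite mulrDl !mulrDr -!addrA; congr (_ + _).
  rewrite !mulrA [r * x]mulrC -!mulrA; congr (_ + (_ + _)).
  by rewrite [s * (x * _)]mulrCA.
Qed.

Record bowtie := Bowtie { bowtie_val : R * R; bowtie_valP : bowtie_pred bowtie_val }.

HB.instance Definition _ := [isSub for bowtie_val].
HB.instance Definition _ := [Choice of bowtie by <:].
HB.instance Definition _ :=
  GRing.SubChoice_isSubComPzRing.Build _ _ bowtie bowtie_subring_closed.

End Bowtie.

Section Homological.
Variable A : pzRingType.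

Definition exact_at (U V W : lmodType A) (f : U -> V) (g : V -> W) : Prop :=
  forall v : V, g v = 0 <-> exists u : U, f u = v.

Definition projective_mod (F : lmodType A) : Prop :=
  forall (U V : lmodType A) (p : {linear U -> V}) (h : {linear F -> V}),
    (forall v : V, exists u : U, p u = v) ->
    exists h' : {linear F -> U}, forall z : F, p (h' z) = h z.

Definition fin_presented (P : lmodType A) : Prop :=
  exists (m1 m0 : nat) (a : {linear 'rV[A]_m1 -> 'rV[A]_m0})
         (b : {linear 'rV[A]_m0 -> P}),
    (forall z : P, exists v, b v = z) /\ exact_at a b.

Definition proj_resolution (P : lmodType A) (F : nat -> lmodType A)
    (d : forall i, {linear F i.+1 -> F i}) (eps : {linear F 0%N -> P}) : Prop :=
  [/\ forall i, projective_mod (F i),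
      forall z : P, exists v, eps v = z,
      exact_at (d 0%N) eps &
      forall i, exact_at (d i.+1) (d i)].

(* Ext^{n+1}_A(P, M) = 0, computed as the (n+1)-st cohomology of
   Hom_A(F_•, M) for a projective resolution F_• of P (the result being
   independent of the resolution, we require it for all of them). *)
Definition Ext_succ_vanishes (n : nat) (P M : lmodType A) : Prop :=
  forall (F : nat -> lmodType A) (d : forall i, {linear F i.+1 -> F i})
         (eps : {linear F 0%N -> P}),
    proj_resolution d eps ->
    forall f : {linear F n.+1 -> M},
      (forall z : F n.+2, f (d n.+1 z) = 0) ->
      exists g : {linear F n -> M}, forall z : F n.+1, f z = g (d n z).

Definition FPid_le (M : lmodType A) (n : nat) : Prop :=
  forall P : lmodType A, fin_presented P -> Ext_succ_vanishes n P M.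

(* FP-id_A(M) = n  (n finite); FP-id_A(M) = oo iff no n satisfies this *)
Definition FPid_is (M : lmodType A) (n : nat) : Prop :=
  FPid_le M n /\ forall m : nat, (m < n)%N -> ~ FPid_le M m.

End Homological.

(* Main.v *)
Require Import Defs.
From HB Require Import structures.
From mathcomp Require Import all_boot all_order all_algebra.
Set Implicit Arguments. Unset Strict Implicit. Unset Printing Implicit Defensive.
Local Open Scope ring_scope.
Import GRing.Theory.

Section Basic.
Variables (R : comPzRingType) (x : R).
Local Notation S := (bowtie x).

Lemma phiP (r : R) : bowtie_pred x (r, r).
Proof. apply/bowtie_predP; exists r, 0; by rewrite mulr0 addr0. Qed.
Definition phi (r : R) : S := Bowtie (phiP r).
Lemma eP : bowtie_pred x (0, x).
Proof. apply/bowtie_predP; exists 0, 1; by rewrite mulr1 add0r. Qed.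
Definition ee : S := Bowtie eP.

Lemma val_phi r : val (phi r) = (r, r). Proof. by []. Qed.
Lemma val_ee : val ee = (0, x). Proof. by []. Qed.

Lemma phiD a b : phi (a + b) = phi a + phi b.
Proof. by apply: val_inj; rewrite rmorphD. Qed.
Lemma phiM a b : phi (a * b) = phi a * phi b.
Proof. by apply: val_inj; rewrite rmorphM. Qed.
Lemma phi1 : phi 1 = 1.
Proof. by apply: val_inj; rewrite rmorph1. Qed.
Lemma phi0 : phi 0 = 0.
Proof. by apply: val_inj; rewrite rmorph0. Qed.
Lemma phiN a : phi (- a) = - phi a.
Proof. by apply: val_inj; rewrite rmorphN. Qed.

Definition alpha (p : S) : R := (val p).1.

Lemma beta_ex (p : S) : exists s, (val p).2 == (val p).1 + x * s.
Proof.
case/bowtie_predP: (valP p) => r [s ->]; exists s; by [].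
Qed.
Definition beta (p : S) : R := xchoose (beta_ex p).
Lemma betaP p : (val p).2 = (val p).1 + x * beta p.
Proof. exact/eqP/(xchooseP (beta_ex p)). Qed.

Lemma decomp p : p = phi (alpha p) + phi (beta p) * ee.
Proof.
apply: val_inj; rewrite rmorphD rmorphM /= /alpha.
rewrite -[bowtie_val p]/(val p) {1}[val p]surjective_pairing (betaP p).
by congr (_, _) => /=; rewrite ?mulr0 ?addr0 // mulrC.
Qed.
End Basic.
Section B2.
Variables (R : comPzRingType) (x : R) (hx : regular_elt x).
Local Notation S := (bowtie x).
Local Notation phi := (@phi R x).
Local Notation ee := (ee x).
Local Notation alpha := (@alpha R x).
Local Notation beta := (@beta R x).

Lemma ee2 : ee * ee = phi x * ee.
Proof. apply: val_inj; rewrite !rmorphM /=. by congr (_,_) => /=; rewrite ?mulr0. Qed.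

Lemma mul_form a b c d :
  (phi a + phi b * ee) * (phi c + phi d * ee) =
  phi (a * c) + phi (a * d + b * c + x * b * d) * ee.
Proof.
rewrite mulrDl !mulrDr !phiD !phiM !mulrDl.
rewrite -!addrA; congr (_ + _).
rewrite mulrA; congr (_ + _).
rewrite [phi b * ee * phi c]mulrAC; congr (_ + _).
rewrite mulrA [phi b * ee * phi d]mulrAC -[phi b * phi d * ee * ee]mulrA ee2.
by rewrite mulrA [phi x * phi b]mulrC [phi b * phi x * phi d]mulrAC [phi b * phi d * phi x]mulrAC.
Qed.

Lemma alpha_form a b : alpha (phi a + phi b * ee) = a.
Proof. by rewrite /alpha rmorphD rmorphM /= mulr0 addr0. Qed.

Lemma beta_form a b : beta (phi a + phi b * ee) = b.
Proof.
have := betaP (phi a + phi b * ee).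
rewrite rmorphD rmorphM /= mulr0 addr0 => /addrI /eqP.
rewrite mulrC -subr_eq0 -mulrBr => /eqP /hx /eqP.
by rewrite subr_eq0 => /eqP.
Qed.

Lemma form_inj a b c d : phi a + phi b * ee = phi c + phi d * ee -> a = c /\ b = d.
Proof.
move=> E; split.
  by have := alpha_form a b; rewrite E alpha_form.
by have := beta_form a b; rewrite E beta_form.
Qed.

Lemma alphaD p q : alpha (p + q) = alpha p + alpha q.
Proof. by rewrite /alpha rmorphD. Qed.
Lemma betaD p q : beta (p + q) = beta p + beta q.
Proof.
rewrite {1}(decomp p) {1}(decomp q) addrACA -mulrDl -!phiD.
by rewrite beta_form.
Qed.
Lemma alphaM p q : alpha (p * q) = alpha p * alpha q.
Proof. by rewrite /alpha rmorphM. Qed.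
Lemma betaM p q : beta (p * q) = alpha p * beta q + beta p * alpha q + x * beta p * beta q.
Proof. by rewrite {1}(decomp p) {1}(decomp q) mul_form beta_form. Qed.
Lemma alpha_phi a : alpha (phi a) = a. Proof. by []. Qed.
Lemma beta_phi a : beta (phi a) = 0.
Proof. by rewrite -[phi a]addr0 -[0 in LHS](mul0r ee) -phi0 beta_form. Qed.
Lemma alpha_ee : alpha ee = 0. Proof. by []. Qed.
Lemma beta_ee : beta ee = 1.
Proof. by rewrite -[ee]add0r -phi0 -[ee in LHS]mul1r -phi1 beta_form. Qed.
Lemma alpha0 : alpha 0 = 0. Proof. by []. Qed.
Lemma beta0 : beta 0 = 0. Proof. by rewrite -phi0 beta_phi. Qed.
Lemma alpha1 : alpha 1 = 1. Proof. by rewrite -phi1. Qed.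
Lemma beta1 : beta 1 = 0. Proof. by rewrite -phi1 beta_phi. Qed.
End B2.

Section B3.
Variables (R : comPzRingType) (x : R) (hx : regular_elt x).
Local Notation S := (bowtie x).
Local Notation phi := (@phi R x).
Local Notation ee := (ee x).
Local Notation alpha := (@alpha R x).
Local Notation beta := (@beta R x).

Lemma alpha_phiM r p : alpha (phi r * p) = r * alpha p.
Proof. by rewrite alphaM. Qed.
Lemma beta_phiM r p : beta (phi r * p) = r * beta p.
Proof. by rewrite (betaM hx) (beta_phi hx) !mul0r mulr0 !mul0r !addr0. Qed.
Lemma beta_eeM p : beta (ee * p) = alpha p + x * beta p.
Proof. by rewrite (betaM hx) (beta_ee hx) alpha_ee mul0r add0r mul1r mulr1. Qed.
Lemma eq_by_beta s t : beta s = beta t -> beta (ee * s) = beta (ee * t) -> s = t.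
Proof.
move=> E1; rewrite !beta_eeM E1 => /addIr E2.
by rewrite (decomp s) (decomp t) E1 E2.
Qed.
End B3.

Section Ind.
Variables (R : comPzRingType) (x : R) (hx : regular_elt x).
Local Notation S := (bowtie x).
Local Notation phi := (@phi R x).
Local Notation ee := (ee x).
Local Notation alpha := (@alpha R x).
Local Notation beta := (@beta R x).

Variable M : lmodType R.
Definition indT : Type := (fun _ : regular_elt x => (M * M)%type) hx.
HB.instance Definition _ := GRing.Zmodule.on indT.

Definition indS (s : S) (m : indT) : indT :=
  (alpha s *: m.1, beta s *: m.1 + (alpha s + beta s * x) *: m.2).

Lemma indS_A a b v : indS a (indS b v) = indS (a * b) v.
Proof.
case: v => m1 m2; rewrite /indS /= (alphaM) (betaM hx); congr (_, _).
  by rewrite scalerA.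
rewrite scalerDr !scalerA addrA -scalerDl; congr (_ + _).
  by rewrite mulrDl addrCA addrA [beta a * x]mulrC.
congr (_ *: _).
rewrite mulrDl !mulrDr -!addrA; congr (_ + _).
rewrite mulrDl; congr (_ + _).
  by rewrite mulrA.
rewrite [RHS]mulrDl; congr (_ + _).
  by rewrite mulrAC.
by rewrite mulrA [beta a * x]mulrC.
Qed.

Lemma indS_1 : left_id 1 indS.
Proof.
case=> m1 m2; rewrite /indS /= alpha1 (beta1 hx) scale0r add0r mul0r addr0 !scale1r.
by [].
Qed.

Lemma indS_Dr : right_distributive indS +%R.
Proof.
move=> s [m1 m2] [n1 n2]; rewrite /indS /=; congr (_, _).
  by rewrite scalerDr.
by rewrite !scalerDr addrACA.
Qed.

Lemma indS_Dl v : {morph indS^~ v : a b / a + b}.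
Proof.
move=> a b; case: v => m1 m2; rewrite /indS /= alphaD (betaD hx); congr (_, _).
  by rewrite scalerDl.
by rewrite mulrDl addrACA !scalerDl addrACA.
Qed.

HB.instance Definition _ := GRing.Zmodule_isLmodule.Build S indT indS_A indS_1 indS_Dr indS_Dl.

Lemma indZ (s : S) (m : indT) : s *: m = indS s m.
Proof. by []. Qed.
End Ind.

Section Res.
Variables (R : comPzRingType) (x : R).
Local Notation S := (bowtie x).
Local Notation phi := (@phi R x).
Variable M : lmodType S.
Definition resT : Type := M.
HB.instance Definition _ := GRing.Zmodule.on resT.
Definition resS (r : R) (m : resT) : resT := (phi r *: (m : M)).
Lemma resS_A a b v : resS a (resS b v) = resS (a * b) v.
Proof. by rewrite /resS scalerA phiM. Qed.
Lemma resS_1 : left_id 1 resS.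
Proof. by move=> v; rewrite /resS phi1 scale1r. Qed.
Lemma resS_Dr : right_distributive resS +%R.
Proof. by move=> r u v; rewrite /resS scalerDr. Qed.
Lemma resS_Dl v : {morph resS^~ v : a b / a + b}.
Proof. by move=> a b; rewrite /resS phiD scalerDl. Qed.
HB.instance Definition _ := GRing.Zmodule_isLmodule.Build R resT resS_A resS_1 resS_Dr resS_Dl.
Lemma resZ r (m : resT) : r *: m = (phi r *: (m : M) : M).
Proof. by []. Qed.
End Res.

Section Maps.
Variables (R : comPzRingType) (x : R) (hx : regular_elt x).
Local Notation S := (bowtie x).
Local Notation phi := (@phi R x).
Local Notation ee := (ee x).
Local Notation alpha := (@alpha R x).
Local Notation beta := (@beta R x).

Section ResF.
Variables (U V : lmodType S) (f : {linear U -> V}).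
Definition resf : resT U -> resT V := fun u => f u.
Lemma resf_lin : linear resf.
Proof. by move=> r u v; rewrite /resf !resZ linearP. Qed.
HB.instance Definition _ := GRing.isLinear.Build R (resT U) (resT V) _ resf resf_lin.
End ResF.

Section IndF.
Variables (U V : lmodType R) (f : {linear U -> V}).
Definition indf : indT hx U -> indT hx V := fun u => (f u.1, f u.2).
Lemma indf_lin : linear indf.
Proof.
move=> s [u1 u2] [v1 v2]; rewrite /indf !indZ /indS /=.
by congr (_, _) => /=; rewrite !linearD !linearZ.
Qed.
HB.instance Definition _ := GRing.isLinear.Build S (indT hx U) (indT hx V) _ indf indf_lin.
End IndF.

Lemma ee_mul s : ee * s = phi (alpha s + beta s * x) * ee.
Proof.
rewrite {1}(decomp s) mulrDr [ee * (_ * ee)]mulrCA (ee2 x) mulrA.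
by rewrite [ee * phi _]mulrC -mulrDl phiD phiM.
Qed.

Lemma lin_by_gen (U V : lmodType S) (f : U -> V) :
  (forall u v, f (u + v) = f u + f v) ->
  (forall r u, f (phi r *: u) = phi r *: f u) ->
  (forall u, f (ee *: u) = ee *: f u) -> linear f.
Proof.
move=> fD fphi fe s u v; rewrite fD; congr (_ + _).
rewrite [s in LHS]decomp scalerDl fD -scalerA fphi fphi fe scalerA -scalerDl.
by rewrite -decomp.
Qed.

Section HMap.
Variables (F : lmodType S) (V : lmodType R) (h : {linear resT F -> V}).
Definition Hmap : F -> indT hx V :=
  fun z => (h ((ee *: z : F) : resT F) - x *: h (z : resT F), h (z : resT F)).
Lemma hphi r (w : F) : h ((phi r *: w : F) : resT F) = r *: h (w : resT F).
Proof. exact: linearZ. Qed.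
Lemma hD (u v : F) : h ((u + v : F) : resT F) = h (u : resT F) + h (v : resT F).
Proof. exact: linearD. Qed.
Lemma Hmap_lin : linear Hmap.
Proof.
apply: lin_by_gen.
- move=> u v; rewrite /Hmap scalerDr !hD; congr (_, _) => /=.
  by rewrite scalerDr opprD addrACA.
- move=> r u; rewrite /Hmap indZ /indS /= alpha_phi (beta_phi hx) scale0r add0r mul0r addr0.
  rewrite scalerA mulrC -scalerA !hphi; congr (_, _).
  by rewrite scalerBr !scalerA mulrC.
- move=> u; rewrite /Hmap indZ /indS /= alpha_ee (beta_ee hx) scale0r scale1r add0r mul1r.
  rewrite scalerA (ee2 x) -scalerA hphi subrr; congr (_, _).
  by rewrite subrK.
Qed.
HB.instance Definition _ := GRing.isLinear.Build S F (indT hx V) _ Hmap Hmap_lin.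
End HMap.

Section Snd.
Variables (F : lmodType S) (U : lmodType R) (K : {linear F -> indT hx U}).
Definition sndf : resT F -> U := fun z => (K z).2.
Lemma sndf_lin : linear sndf.
Proof.
move=> r u v; rewrite /sndf resZ linearP /= alpha_phi.
by rewrite (beta_phi hx) scale0r add0r mul0r addr0.
Qed.
HB.instance Definition _ := GRing.isLinear.Build R (resT F) U _ sndf sndf_lin.
End Snd.

Lemma indZphi (F : lmodType R) r (m : indT hx F) : phi r *: m = (r *: m.1, r *: m.2).
Proof.
by rewrite indZ /indS alpha_phi (beta_phi hx) scale0r add0r mul0r addr0.
Qed.
Lemma indZee (F : lmodType R) (m : indT hx F) : ee *: m = (0, m.1 + x *: m.2).
Proof.
by rewrite indZ /indS alpha_ee (beta_ee hx) scale0r scale1r add0r mul1r.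
Qed.

Section H0.
Variables (F : lmodType R) (V : lmodType S) (h : {linear indT hx F -> V}).
Definition h0 : F -> resT V := fun m => h (m, 0).
Lemma h0_lin : linear h0.
Proof.
move=> r u v; rewrite /h0 resZ -linearZ -linearD indZphi /= scaler0.
by congr (h _); congr (_, _) => /=; rewrite addr0.
Qed.
HB.instance Definition _ := GRing.isLinear.Build R F (resT V) _ h0 h0_lin.
End H0.

Section KMap.
Variables (F : lmodType R) (U : lmodType S) (k : {linear F -> resT U}).
Definition Kmap : indT hx F -> U := fun z => (k z.1 : U) + ee *: (k z.2 : U).
Lemma kphi r (w : F) : (k (r *: w) : U) = phi r *: (k w : U).
Proof. by rewrite linearZ. Qed.
Lemma kD (u v : F) : (k (u + v) : U) = (k u : U) + (k v : U).
Proof. by rewrite linearD. Qed.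
Lemma Kmap_lin : linear Kmap.
Proof.
apply: lin_by_gen.
- by move=> [u1 u2] [v1 v2]; rewrite /Kmap /= !kD scalerDr addrACA.
- move=> r [u1 u2]; rewrite /Kmap indZphi /= !kphi scalerDr !scalerA mulrC.
  by [].
- move=> [u1 u2]; rewrite /Kmap indZee /= kD kphi scalerDr scalerA scalerDr.
  rewrite (linear0 k) add0r scalerA (ee2 x) mulrC.
  by [].
Qed.
HB.instance Definition _ := GRing.isLinear.Build S (indT hx F) U _ Kmap Kmap_lin.
End KMap.

Definition jmap : indT hx (R^o) -> S^o := fun z => phi z.1 + phi z.2 * ee.
Lemma jmap_lin : linear jmap.
Proof.
apply: lin_by_gen.
- by move=> [u1 u2] [v1 v2]; rewrite /jmap /= !phiD mulrDl addrACA.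
- move=> r [u1 u2]; rewrite /jmap indZphi /= !phiM /GRing.scale /=.
  by rewrite mulrDr mulrA.
- move=> [u1 u2]; rewrite /jmap indZee /= phi0 add0r phiD mulrDl.
  rewrite /GRing.scale /= mulrDr [ee * phi u1]mulrC; congr (_ + _).
  by rewrite phiM mulrCA (ee2 x) mulrA [phi u2 * phi x]mulrC.
Qed.
HB.instance Definition _ := GRing.isLinear.Build S (indT hx (R^o)) (S^o) _ jmap jmap_lin.

Definition alphaL : resT (S^o) -> R^o := fun s => alpha s.
Lemma alphaL_lin : linear alphaL.
Proof. by move=> r u v; rewrite /alphaL resZ alphaD /GRing.scale /= alphaM. Qed.
HB.instance Definition _ := GRing.isLinear.Build R (resT (S^o)) (R^o) _ alphaL alphaL_lin.
Definition betaL : resT (S^o) -> R^o := fun s => beta s.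
Lemma betaL_lin : linear betaL.
Proof.
by move=> r u v; rewrite /betaL resZ (betaD hx) /GRing.scale /= (beta_phiM hx).
Qed.
HB.instance Definition _ := GRing.isLinear.Build R (resT (S^o)) (R^o) _ betaL betaL_lin.

End Maps.

Section Transfer.
Variables (R : comPzRingType) (x : R) (hx : regular_elt x).
Local Notation S := (bowtie x).
Local Notation phi := (@phi R x).
Local Notation ee := (ee x).
Local Notation alpha := (@alpha R x).
Local Notation beta := (@beta R x).

Lemma projA (F : lmodType S) : projective_mod F -> projective_mod (resT F).
Proof.
move=> PF U V p h surj.
have surjI : forall v : indT hx V, exists u : indT hx U, indf p u = v.
  move=> [v1 v2]; have [u1 <-] := surj v1; have [u2 <-] := surj v2.
  by exists (u1, u2).
have [K HK] := PF (indT hx U) (indT hx V) (indf p) (Hmap hx h) surjI.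
exists (sndf K) => z; have := HK z.
by rewrite /indf /sndf /Hmap => /(congr1 snd).
Qed.

Lemma projB (F : lmodType R) : projective_mod F -> projective_mod (indT hx F).
Proof.
move=> PF U V p h surj.
have [k Hk] := PF (resT U) (resT V) (resf p) (h0 h) surj.
exists (Kmap k) => -[m1 m2]; rewrite /Kmap linearD linearZ /=.
have E1 : p (k m1) = h (m1, 0) := Hk m1.
have E2 : p (k m2) = h (m2, 0) := Hk m2.
rewrite E1 E2.
have -> : ((m1, m2) : indT hx F) = ((m1, 0) : indT hx F) + ee *: ((m2, 0) : indT hx F).
  by rewrite indZee /=; congr (_, _); rewrite /= ?scaler0 ?addr0 ?add0r.
by rewrite linearD linearZ.
Qed.

Lemma exact_ind (A B C : lmodType R) (f : {linear A -> B}) (g : {linear B -> C}) :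
  exact_at f g -> exact_at (@indf _ _ hx _ _ f) (@indf _ _ hx _ _ g).
Proof.
move=> E [v1 v2]; split.
  move=> H; have H1 : g v1 = 0 by move: H => /(congr1 fst).
  have H2 : g v2 = 0 by move: H => /(congr1 snd).
  have [u1 <-] := (E v1).1 H1; have [u2 <-] := (E v2).1 H2.
  by exists (u1, u2).
move=> [[u1 u2] <-]; rewrite /indf /=.
have [_ ->] := E (f u1); last by exists u1.
have [_ ->] := E (f u2); last by exists u2.
by [].
Qed.

Lemma surj_ind (A B : lmodType R) (f : {linear A -> B}) :
  (forall z, exists v, f v = z) -> forall z, exists v, @indf _ _ hx _ _ f v = z.
Proof.
move=> E [z1 z2]; have [u1 <-] := E z1; have [u2 <-] := E z2.
by exists (u1, u2).
Qed.

End Transfer.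

Lemma pres_transfer (T : pzRingType) (A1 A0 B1 B0 P : lmodType T)
  (a : {linear A1 -> A0}) (b : {linear A0 -> P}) (c1 : {linear B1 -> A1})
  (c0 : {linear B0 -> A0}) (c0i : {linear A0 -> B0}) :
  (forall z, exists v, b v = z) -> exact_at a b -> (forall z, exists v, c1 v = z) ->
  cancel c0 c0i -> cancel c0i c0 ->
  (forall z, exists v, (b \o c0) v = z) /\ exact_at (c0i \o a \o c1) (b \o c0).
Proof.
move=> sb ex sc1 K1 K2; split.
  by move=> z; have [v <-] := sb z; exists (c0i v); rewrite /= K2.
move=> v; split => /=.
  move=> /(ex (c0 v)).1 [w Ew]; have [u Eu] := sc1 w.
  by exists u; rewrite /= Eu Ew K1.
by move=> [u <-]; rewrite /= K2; apply/(ex _).2; exists (c1 u).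
Qed.

Lemma inv_lin (T : pzRingType) (U V : lmodType T) (f : {linear U -> V}) (g : V -> U) :
  cancel f g -> cancel g f -> linear g.
Proof.
move=> fg gf r u v; apply: (can_inj fg).
by rewrite linearP !gf.
Qed.

Section Iso.
Variables (R : comPzRingType) (x : R) (hx : regular_elt x).
Local Notation S := (bowtie x).
Local Notation phi := (@phi R x).
Local Notation ee := (ee x).
Local Notation alpha := (@alpha R x).
Local Notation beta := (@beta R x).

Section IsoA.
Variable m : nat.
Definition cA : 'rV[R]_(m + m) -> resT ('rV[S]_m) :=
  fun v => \row_j (phi (v 0 (lshift m j)) + phi (v 0 (rshift m j)) * ee).
Definition ciA : resT ('rV[S]_m) -> 'rV[R]_(m + m) :=
  fun w => row_mx (\row_j alpha ((w : 'rV[S]_m) 0 j)) (\row_j beta ((w : 'rV[S]_m) 0 j)).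
Lemma cA_lin : linear cA.
Proof.
move=> r v w; rewrite /cA resZ; apply/rowP => j; rewrite !mxE.
rewrite !phiD !phiM mulrDl mulrDr addrACA mulrA.
by [].
Qed.
HB.instance Definition _ := GRing.isLinear.Build R _ _ _ cA cA_lin.
Lemma cA_K : cancel cA ciA.
Proof.
move=> v; rewrite /ciA -[RHS]hsubmxK; congr row_mx; apply/rowP => j;
  rewrite !mxE ?alpha_form ?(beta_form hx) //.
Qed.
Lemma ciA_K : cancel ciA cA.
Proof.
move=> w; apply/rowP => j; rewrite /cA /ciA mxE row_mxEl row_mxEr !mxE.
by rewrite -decomp.
Qed.
HB.instance Definition _ := GRing.isLinear.Build R _ _ _ ciA (inv_lin cA_K ciA_K).
End IsoA.

Section IsoB.
Variable m : nat.
Definition ioi : indT hx ('rV[R]_m) -> 'rV[S]_m :=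
  fun z => \row_j (phi (z.1 0 j) + phi (z.2 0 j) * ee).
Definition io : 'rV[S]_m -> indT hx ('rV[R]_m) :=
  fun w => (\row_j alpha (w 0 j), \row_j beta (w 0 j)).
Lemma ioi_lin : linear ioi.
Proof.
apply: lin_by_gen.
- move=> [u1 u2] [v1 v2]; apply/rowP => j; rewrite /ioi !mxE /=.
  by rewrite !phiD mulrDl addrACA.
- move=> r [u1 u2]; apply/rowP => j; rewrite /ioi indZphi !mxE /=.
  by rewrite !phiM mulrDr mulrA.
- move=> [u1 u2]; apply/rowP => j; rewrite /ioi indZee !mxE /=.
  rewrite phi0 add0r phiD mulrDl mulrDr [ee * phi _]mulrC; congr (_ + _).
  by rewrite phiM mulrCA (ee2 x) mulrA [phi _ * phi x]mulrC.
Qed.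
HB.instance Definition _ := GRing.isLinear.Build S _ _ _ ioi ioi_lin.
Lemma io_K : cancel io ioi.
Proof. by move=> w; apply/rowP => j; rewrite /ioi /io !mxE /= -decomp. Qed.
Lemma ioi_K : cancel ioi io.
Proof.
move=> [u1 u2]; rewrite /ioi /io; congr (_, _); apply/rowP => j;
  rewrite !mxE ?alpha_form ?(beta_form hx) //.
Qed.
HB.instance Definition _ := GRing.isLinear.Build S _ _ _ io (inv_lin ioi_K io_K).
End IsoB.

Lemma fpA (P : lmodType S) : fin_presented P -> fin_presented (resT P).
Proof.
case=> m1 [m0 [a [b [sb ex]]]].
have sc1 : forall z, exists v, @cA m1 v = z by move=> z; exists (ciA z); rewrite ciA_K.
have [H1 H2] := pres_transfer (a:=resf a) (b:=resf b) (c1:=@cA m1) (c0:=@cA m0) (c0i:=@ciA m0) sb ex sc1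
  (@cA_K m0) (@ciA_K m0).
by exists (m1 + m1)%N, (m0 + m0)%N, (@ciA m0 \o resf a \o @cA m1), (resf b \o @cA m0).
Qed.

Lemma fpB (N : lmodType R) : fin_presented N -> fin_presented (indT hx N).
Proof.
case=> m1 [m0 [a [b [sb ex]]]].
have sc1 : forall z, exists v, @io m1 v = z by move=> z; exists (ioi z); rewrite ioi_K.
have [H1 H2] := pres_transfer (a:=@indf _ _ hx _ _ a) (b:=@indf _ _ hx _ _ b) (c1:=@io m1) (c0:=@io m0) (c0i:=@ioi m0)
  (surj_ind sb) (exact_ind ex) sc1 (@io_K m0) (@ioi_K m0).
by exists m1, m0, (@ioi m0 \o indf a \o @io m1), (indf b \o @io m0).
Qed.
End Iso.

Section Main.
Variables (R : comPzRingType) (x : R) (hx : regular_elt x).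
Local Notation S := (bowtie x).
Local Notation phi := (@phi R x).
Local Notation ee := (ee x).
Local Notation alpha := (@alpha R x).
Local Notation beta := (@beta R x).

Lemma dirA n : FPid_le (R^o : lmodType R) n -> FPid_le (S^o : lmodType S) n.
Proof.
move=> H P fpP F d eps [Fproj Esurj Eex0 Eex] f cocyc.
pose F' : nat -> lmodType R := fun i => resT (F i).
pose d' := fun i => (resf (d i) : {linear F' i.+1 -> F' i}).
pose eps' := (resf eps : {linear F' 0%N -> resT P}).
have PR : proj_resolution d' eps'.
  by split => [i|z|v|i v]; [exact: projA | exact: Esurj | exact: Eex0 | exact: Eex].
have coc : forall z : F' n.+2, (beta (f (d n.+1 z)) : R^o) = 0.
  by move=> z; rewrite cocyc (beta0 hx).
have [g Hg] := H (resT P) (fpA hx fpP) F' d' eps' PR (@betaL R x \o resf f) coc.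
exists (@jmap _ _ hx \o Hmap hx g : {linear _ -> _}) => z /=.
apply: (eq_by_beta hx).
  have := Hg z; rewrite /= /betaL /resf /d' /= => ->.
  by rewrite /jmap /Hmap /= (beta_form hx).
rewrite !(beta_eeM hx) /jmap /Hmap /= alpha_form (beta_form hx) subrK.
have := Hg (ee *: z); rewrite /= /betaL /resf /d' /= !linearZ /=.
by rewrite [ee *: f z]/(ee * f z) (beta_eeM hx) => ->.
Qed.

Lemma dirB n : FPid_le (S^o : lmodType S) n -> FPid_le (R^o : lmodType R) n.
Proof.
move=> H N fpN F d eps [Fproj Esurj Eex0 Eex] f cocyc.
pose F' : nat -> lmodType S := fun i => indT hx (F i).
pose d' := fun i => (@indf _ _ hx _ _ (d i) : {linear F' i.+1 -> F' i}).
pose eps' := (@indf _ _ hx _ _ eps : {linear F' 0%N -> indT hx N}).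
have PR : proj_resolution d' eps'.
  split => [i|z|v|i v].
  - exact: projB.
  - exact: surj_ind.
  - exact: exact_ind.
  - exact: exact_ind.
pose f' := (@jmap _ _ hx \o @indf _ _ hx _ _ f : {linear F' n.+1 -> S^o}).
have coc : forall z, f' (d' n.+1 z) = 0.
  move=> [z1 z2]; change (phi (f (d n.+1 z1)) + phi (f (d n.+1 z2)) * ee = 0 :> S).
  by rewrite !cocyc phi0 mul0r addr0.
have [G HG] := H (indT hx N) (fpB hx fpN) F' d' eps' PR f' coc.
exists (@alphaL R x \o h0 G : {linear _ -> _}) => z /=.
have := HG (z, 0). change (phi (f z) + phi (f 0) * ee = G (d n z, d n 0) -> f z = alpha (G (d n z, 0))). rewrite !linear0 => <-.
by rewrite alpha_form.
Qed.
End Main.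

Unset Implicit Arguments.

Theorem lemma2p4 (R : comPzRingType) (x : R) (hx : regular_elt x) :
  forall n : nat,
    FPid_is (R^o : lmodType R) n <->
    FPid_is ((bowtie x)^o : lmodType (bowtie x)) n.
Proof.
move=> n; split => -[H1 H2]; split.
- exact: (dirA hx H1).
- move=> m lt_mn Hm; exact: (H2 m lt_mn (dirB hx Hm)).
- exact: (dirB hx H1).
- move=> m lt_mn Hm; exact: (H2 m lt_mn (dirA hx Hm)).
Qed.
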